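(* Let $R$ be a commutative ring with identity. Then the cozero-divisor graph $\Gamma'(R)$ is outerplanar if and only if $\Gamma''_I(R)$ is outerplanar for every ideal $I$ of $R$.
   Context: $\Gamma'(R)$ is the simple undirected graph whose vertices are the nonzero non-unit elements of $R$, with distinct vertices $x,y$ adjacent if and only if $x\notin yR$ and $y\notin xR$. For an ideal $I$ of $R$, $\Gamma''_I(R)$ is the simple undirected graph whose vertex set is $\{x\in R\setminus I : xR+I\neq R\}$, with distinct vertices $x,y$ adjacent if and only if $x\notin yR+I$ and $y\notin xR+I$. A graph is outerplanar if it can be drawn in the plane without crossings so that all vertices lie on the unbounded face. *)

(* Defs.v *)
From HB Require Import structures.
From mathcomp Require Import all_boot all_order all_algebra.
From mathcomp Require Import all_classical all_reals all_analysis.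
From mathcomp Require Import Rstruct Rstruct_topology.
Set Implicit Arguments. Unset Strict Implicit. Unset Printing Implicit Defensive.
Import Order.TTheory GRing.Theory Num.Theory.
Local Open Scope classical_set_scope.
Local Open Scope ring_scope.

Definition plane := (Rdefinitions.R * Rdefinitions.R)%type.

Definition unit_interval : set Rdefinitions.R := [set t | 0 <= t <= 1].

Definition is_arc (f : Rdefinitions.R -> plane) : Prop :=
  {within unit_interval, continuous f} /\
  (forall s t, unit_interval s -> unit_interval t -> f s = f t -> s = t).

(* A simple undirected graph on vertex type V with adjacency relation adj
   (assumed symmetric and irreflexive where used). *)
Record drawing (V : Type) (adj : V -> V -> Prop) := Drawing {
  pos : V -> plane;
  arc : V -> V -> Rdefinitions.R -> plane;
  pos_inj : injective pos;
  arc_is_arc : forall x y, adj x y -> is_arc (arc x y);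
  arc_start : forall x y, adj x y -> arc x y 0 = pos x;
  arc_end : forall x y, adj x y -> arc x y 1 = pos y;
  arc_sym : forall x y, adj x y -> arc x y @` unit_interval = arc y x @` unit_interval;
  arc_avoids_vertices : forall x y w t, adj x y -> 0 < t < 1 -> arc x y t <> pos w;
  arcs_no_crossing : forall x y u v s t, adj x y -> adj u v ->
    ~ ((x = u /\ y = v) \/ (x = v /\ y = u)) ->
    unit_interval s -> unit_interval t -> arc x y s = arc u v t ->
    exists2 w, (w = x \/ w = y) /\ (w = u \/ w = v) & arc x y s = pos w
}.

Definition drawing_set V adj (d : @drawing V adj) : set plane :=
  [set p | (exists w, p = pos d w) \/
           (exists x y t, adj x y /\ unit_interval t /\ p = arc d x y t)].

Definition is_face V adj (d : @drawing V adj) (F : set plane) : Prop :=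
  exists2 p, (~` drawing_set d) p & F = connected_component (~` drawing_set d) p.

Definition unbounded_set (F : set plane) : Prop :=
  forall M : Rdefinitions.R, exists2 p, F p & (M < `|p.1| \/ M < `|p.2|).

Definition outerplanar (V : Type) (adj : V -> V -> Prop) : Prop :=
  exists d : @drawing V adj, exists F : set plane,
    [/\ is_face d F, unbounded_set F & forall v, closure F (pos d v)].

Definition is_ideal (R : comNzRingType) (I : R -> Prop) : Prop :=
  [/\ I 0, (forall a b, I a -> I b -> I (a + b)) & (forall a r, I a -> I (a * r))].

Definition principal (R : comNzRingType) (x : R) : R -> Prop :=
  fun z => exists r, z = x * r.

Definition principal_plus (R : comNzRingType) (x : R) (I : R -> Prop) : R -> Prop :=
  fun z => exists r i, I i /\ z = x * r + i.

Definition cozero_vertex (R : comNzRingType) := {x : R | x <> 0 /\ ~ (exists y, x * y = 1)}.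

Definition cozero_adj (R : comNzRingType) (x y : cozero_vertex R) : Prop :=
  proj1_sig x <> proj1_sig y /\ ~ principal (proj1_sig y) (proj1_sig x) /\ ~ principal (proj1_sig x) (proj1_sig y).

Definition cozeroI_vertex (R : comNzRingType) (I : R -> Prop) :=
  {x : R | ~ I x /\ ~ (forall z, principal_plus x I z)}.

Definition cozeroI_adj (R : comNzRingType) (I : R -> Prop) (x y : cozeroI_vertex I) : Prop :=
  proj1_sig x <> proj1_sig y /\ ~ principal_plus (proj1_sig y) I (proj1_sig x) /\ ~ principal_plus (proj1_sig x) I (proj1_sig y).

(* Main.v *)
Require Import Defs.
From HB Require Import structures.
From mathcomp Require Import all_boot all_order all_algebra.
From mathcomp Require Import all_classical all_reals all_analysis.
From mathcomp Require Import Rstruct Rstruct_topology.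
Import Order.TTheory GRing.Theory Num.Theory.
Local Open Scope classical_set_scope.
Local Open Scope ring_scope.

Section Sub.
Variables (V W : Type) (adjV : V -> V -> Prop) (adjW : W -> W -> Prop).
Variable f : V -> W.
Hypothesis finj : injective f.
Hypothesis fadj : forall x y, adjV x y -> adjW (f x) (f y).

Definition sub_drawing (d : @drawing W adjW) : @drawing V adjV.
  refine (@Drawing V adjV (fun v => Defs.pos d (f v)) (fun x y => Defs.arc d (f x) (f y))
    _ _ _ _ _ _ _).
  - by move=> a b /(@pos_inj _ _ d _ _) /finj.
  - by move=> x y /fadj /(arc_is_arc d).
  - by move=> x y /fadj /(arc_start d).
  - by move=> x y /fadj /(arc_end d).
  - by move=> x y /fadj /(arc_sym d).
  - by move=> x y w t /fadj H Ht; apply: (arc_avoids_vertices H Ht).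
  - move=> x y u v s t /fadj Hxy /fadj Huv Hne Is It E.
    have Hne' : ~ ((f x = f u /\ f y = f v) \/ (f x = f v /\ f y = f u)).
      by case=> [[/finj E1 /finj E2]|[/finj E1 /finj E2]]; apply: Hne; [left|right].
    have [w [Hw1 Hw2] Hw] := arcs_no_crossing Hxy Huv Hne' Is It E.
    case: Hw1 => Hw1.
    + exists x; last by rewrite Hw Hw1.
      split; first by left.
      by case: Hw2 => Hw2; [left|right]; apply: finj; rewrite -Hw1 -Hw2.
    + exists y; last by rewrite Hw Hw1.
      split; first by right.
      by case: Hw2 => Hw2; [left|right]; apply: finj; rewrite -Hw1 -Hw2.
Defined.

Lemma sub_drawing_set d : drawing_set (sub_drawing d) `<=` drawing_set d.
Proof.
move=> q [[w ->]|[x [y [t [Hxy [It ->]]]]]]; first by left; exists (f w).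
by right; exists (f x), (f y), t; split => //; apply: fadj.
Qed.

Lemma sub_outerplanar : outerplanar adjW -> outerplanar adjV.
Proof.
move=> [d [F [[p Dp ->] unbF clF]]].
have sub : ~` drawing_set d `<=` ~` drawing_set (sub_drawing d).
  by move=> q Hq /sub_drawing_set.
have Dp' := @sub p Dp.
have FF : connected_component (~` drawing_set d) p `<=`
          connected_component (~` drawing_set (sub_drawing d)) p.
  apply: connected_component_max; last exact: component_connected.
  - exact: connected_component_refl.
  - by move=> q /connected_component_sub /sub.
exists (sub_drawing d), (connected_component (~` drawing_set (sub_drawing d)) p).
split.
- by exists p.
- by move=> M; have [q Fq Hq] := unbF M; exists q => //; apply: FF.
- by move=> v; apply: (closureS FF); apply: clF.
Qed.
End Sub.

Lemma sig_inj (T : Type) (P : T -> Prop) (a b : {x : T | P x}) :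
  proj1_sig a = proj1_sig b -> a = b.
Proof. by case: a b => [a Ha] [b Hb] /= E; subst; congr exist; apply: Prop_irrelevance. Qed.

Theorem proposition3p12 (R : comNzRingType) :
  outerplanar (@cozero_adj R) <->
  (forall I : R -> Prop, is_ideal I -> outerplanar (@cozeroI_adj R I)).
Proof.
split.
- move=> H I [I0 IA IM].
  have fP : forall x : cozeroI_vertex I, proj1_sig x <> 0 /\ ~ (exists y, proj1_sig x * y = 1).
    move=> [x [nIx nall]] /=; split; first by move=> x0; apply: nIx; rewrite x0.
    move=> [y xy]; apply: nall => z; exists (y * z), 0; split => //.
    by rewrite addr0 mulrA xy mul1r.
  pose f (x : cozeroI_vertex I) : cozero_vertex R := exist _ (proj1_sig x) (fP x).
  apply: (@sub_outerplanar _ _ _ _ f) H.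
  + by move=> a b /(congr1 (@proj1_sig _ _)) /= /sig_inj.
  + move=> [x Hx] [y Hy] [/= Hne [H1 H2]]; split => //=; split.
    * by move=> [r E]; apply: H1; exists r, 0; rewrite addr0.
    * by move=> [r E]; apply: H2; exists r, 0; rewrite addr0.
- move=> H.
  pose I0 := fun z : R => z = 0.
  have idl : is_ideal I0.
    rewrite /I0; split => [//|a b -> ->|a r ->]; by rewrite ?addr0 ?mul0r.
  have fP : forall x : cozero_vertex R, ~ I0 (proj1_sig x) /\ ~ (forall z, principal_plus (proj1_sig x) I0 z).
    move=> [x [nx nu]] /=; split => // all.
    have [r [i [-> E]]] := all 1; apply: nu; exists r; by rewrite E addr0.
  pose f (x : cozero_vertex R) : cozeroI_vertex I0 := exist _ (proj1_sig x) (fP x).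
  apply: (@sub_outerplanar _ _ _ _ f) (H I0 idl).
  + by move=> a b /(congr1 (@proj1_sig _ _)) /= /sig_inj.
  + move=> [x Hx] [y Hy] [/= Hne [H1 H2]]; split => //=; split.
    * by move=> [r [i [-> E]]]; apply: H1; exists r; rewrite E addr0.
    * by move=> [r [i [-> E]]]; apply: H2; exists r; rewrite E addr0.
Qed.
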